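(* Let $X$ be a paracompact Hausdorff homologically locally connected topological space. Then every singular cohomology class $\xi\in H^1(X;\mathbb{R})$ is the cohomology class of some continuous closed 1-form on $X$.
   Context: $X$ is homologically locally connected if for every $x\in X$ and every neighborhood $U$ of $x$ there is a neighborhood $V\subset U$ of $x$ such that $\tilde H_q(V)\to\tilde H_q(U)$ is trivial for all $q$. A continuous closed 1-form on $X$ is a collection $\{f_U\}_{U\in\mathcal U}$ of continuous functions $f_U:U\to\mathbb{R}$, $\mathcal U$ an open cover, with $f_U-f_V$ locally constant on $U\cap V$ (up to the obvious equivalence). For a path $\gamma:[0,1]\to X$, $\int_\gamma\omega=\sum_{i}[f_{U_i}(\gamma(t_{i+1}))-f_{U_i}(\gamma(t_i))]$ for a subdivision with $\gamma[t_i,t_{i+1}]\subset U_i\in\mathcal U$. The cohomology class of $\omega$ is the element of $\mathrm{Hom}(H_1(X);\mathbb{R})=H^1(X;\mathbb{R})$ given by the homomorphism of periods $[\gamma]\mapsto\int_\gamma\omega$ on loops. *)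

(* Defs.v *)
From Stdlib Require List.
From HB Require Import structures.
From mathcomp Require Import all_boot all_order all_algebra.
From mathcomp Require Import all_classical all_reals all_analysis.
Set Implicit Arguments. Unset Strict Implicit. Unset Printing Implicit Defensive.
Import Order.TTheory GRing.Theory Num.Theory numFieldNormedType.Exports.
Local Open Scope classical_set_scope.
Local Open Scope ring_scope.

(** Paracompactness: every open cover has a locally finite open refinement
    (Hausdorffness is assumed separately, via [hausdorff_space]). *)
Definition paracompact (X : topologicalType) : Prop :=
  forall (I : Type) (U : I -> set X),
    (forall i, open (U i)) -> (forall x, exists i, U i x) ->
    exists (J : Type) (W : J -> set X),
      [/\ (forall j, open (W j)),
          (forall x, exists j, W j x),
          (forall j, exists i, W j `<=` U i) &
          (forall x : X, exists N : set X, nbhs x N /\ finite_set [set j | W j `&` N !=set0])].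

Section Singular.
Variables (R : realType) (X : topologicalType).

Definition std_simplex (n : nat) : set 'rV[R]_(n.+1) :=
  [set t | (forall i, 0 <= t ord0 i) /\ \sum_i t ord0 i = 1].

(** A singular n-simplex is a map continuous on the standard simplex; two maps
    denote the same singular simplex iff they agree on the standard simplex. *)
Definition sing_simplex (n : nat) (s : 'rV[R]_(n.+1) -> X) : Prop :=
  {within @std_simplex n, continuous s}.

Definition same_simplex (n : nat) (s t : 'rV[R]_(n.+1) -> X) : Prop :=
  forall u, @std_simplex n u -> s u = t u.

Definition chain (n : nat) := seq (int * ('rV[R]_(n.+1) -> X)).

Definition coef (n : nat) (c : chain n) (t : 'rV[R]_(n.+1) -> X) : int :=
  \sum_(p <- c) (if `[< same_simplex p.2 t >] then p.1 else 0).

(** i-th face inclusion Delta^n -> Delta^(n+1) (insert a 0 at position i) *)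
Definition face (n : nat) (i : 'I_(n.+2)) (u : 'rV[R]_(n.+1)) : 'rV[R]_(n.+2) :=
  \row_j (match unlift i j with Some k => u ord0 k | None => 0 end).

Definition bnd (n : nat) (c : chain n.+1) : chain n :=
  flatten [seq [seq (((-1) ^+ (nat_of_ord i)) * p.1, p.2 \o face i) | i <- enum 'I_(n.+2)]
          | p <- c].

Definition chain_in (n : nat) (U : set X) (c : chain n) : Prop :=
  forall p, List.In p c -> sing_simplex p.2 /\ p.2 @` @std_simplex n `<=` U.

(** reduced cycles: augmentation zero in degree 0, boundary zero otherwise *)
Definition rcycle (q : nat) : chain q -> Prop :=
  match q with
  | 0 => fun c => \sum_(p <- c) p.1 = 0
  | q'.+1 => fun c => forall t, coef (bnd c) t = 0
  end.

(** the map \tilde H_q(V) -> \tilde H_q(U) induced by inclusion is trivial *)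
Definition hom_trivial (q : nat) (V U : set X) : Prop :=
  forall c : chain q, chain_in V c -> rcycle c ->
    exists d : chain q.+1, chain_in U d /\ forall t, coef (bnd d) t = coef c t.

Definition HLC : Prop :=
  forall (x : X) (U : set X), nbhs x U ->
    exists V : set X, [/\ nbhs x V, V `<=` U & forall q, hom_trivial q V U].

Definition cocycle1 (xi : ('rV[R]_2 -> X) -> R) : Prop :=
  (forall s t, same_simplex s t -> xi s = xi t) /\
  (forall s : 'rV[R]_3 -> X, sing_simplex s ->
     \sum_(i < 3) (-1) ^+ (nat_of_ord i) * xi (s \o face i) = 0).

Definition closed_1form (I : Type) (U : I -> set X) (f : I -> X -> R) : Prop :=
  [/\ (forall i, open (U i)),
      (forall x, exists i, U i x),
      (forall i, {within U i, continuous f i}) &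
      (forall i j x, U i x -> U j x ->
         exists W, [/\ nbhs x W, W `<=` U i `&` U j &
                      forall y, W y -> f i y - f j y = f i x - f j x])].

Definition unit_interval : set R := [set s | 0 <= s <= 1].

Definition loop (g : R -> X) : Prop :=
  {within unit_interval, continuous g} /\ g 0 = g 1.

Definition admissible (I : Type) (U : I -> set X) (g : R -> X)
    (n : nat) (t : nat -> R) (k : nat -> I) : Prop :=
  [/\ t 0%N = 0, t n = 1,
      (forall m, (m < n)%N -> t m <= t m.+1) &
      (forall m, (m < n)%N -> forall s, t m <= s <= t m.+1 -> U (k m) (g s))].

Definition riemann_sum (I : Type) (f : I -> X -> R) (g : R -> X)
    (n : nat) (t : nat -> R) (k : nat -> I) : R :=
  \sum_(m < n) (f (k m) (g (t m.+1)) - f (k m) (g (t m))).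

Definition path_integral_is (I : Type) (U : I -> set X) (f : I -> X -> R)
    (g : R -> X) (v : R) : Prop :=
  (exists n t k, admissible U g n t k) /\
  (forall n t k, admissible U g n t k -> riemann_sum f g n t k = v).

(** a path [0,1] -> X viewed as a singular 1-simplex (vertex 0 |-> g 0) *)
Definition path_simplex (g : R -> X) : 'rV[R]_2 -> X := fun u => g (u ord0 ord_max).

End Singular.

(* Main.v *)
Require Import Defs.
From HB Require Import structures.
From mathcomp Require Import all_boot all_order all_algebra.
From mathcomp Require Import all_classical all_reals all_analysis.
From mathcomp Require Import ring lra zify finmap.
Import Order.TTheory GRing.Theory Num.Theory numFieldNormedType.Exports.
Local Open Scope classical_set_scope.
Local Open Scope ring_scope.
Set Implicit Arguments. Unset Strict Implicit. Unset Printing Implicit Defensive.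

Section Chains.
Variables (R : realType) (X : topologicalType).

Lemma intr_sum (I : Type) (s : seq I) (P : pred I) (F : I -> int) :
  (\sum_(q <- s | P q) F q)%:~R = \sum_(q <- s | P q) (F q)%:~R :> R.
Proof.
elim: s => [|a s IH]; first by rewrite !big_nil.
by rewrite !big_cons; case: (P a); rewrite ?intrD IH.
Qed.

Lemma same_sym n (s t : 'rV[R]_n.+1 -> X) : same_simplex s t -> same_simplex t s.
Proof. by move=> H u Hu; rewrite H. Qed.
Lemma same_trans n (s t w : 'rV[R]_n.+1 -> X) :
  same_simplex s t -> same_simplex t w -> same_simplex s w.
Proof. by move=> H1 H2 u Hu; rewrite H1 // H2. Qed.

Definition negc n (c : chain R X n) : chain R X n := [seq (- p.1, p.2) | p <- c].

Lemma coef_cat n (c1 c2 : chain R X n) t : coef (c1 ++ c2) t = coef c1 t + coef c2 t.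
Proof. by rewrite /coef big_cat. Qed.

Lemma coef_neg n (c : chain R X n) t : coef (negc c) t = - coef c t.
Proof.
rewrite /coef big_map -sumrN; apply: eq_bigr => p _ /=.
by case: ifP; rewrite ?oppr0.
Qed.

Lemma bnd_cat n (c1 c2 : chain R X n.+1) : bnd (c1 ++ c2) = bnd c1 ++ bnd c2.
Proof. by rewrite /bnd map_cat flatten_cat. Qed.

Lemma bnd_neg n (c : chain R X n.+1) : bnd (negc c) = negc (bnd c).
Proof.
rewrite /bnd /negc map_flatten -!map_comp; congr flatten.
apply: eq_map => p /=; rewrite -map_comp; apply: eq_map => i /=.
by rewrite mulrN.
Qed.

Lemma coef_nil n (t : 'rV[R]_n.+1 -> X) : coef ([::] : chain R X n) t = 0.
Proof. by rewrite /coef big_nil. Qed.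

Lemma chain_in_cat n S (c1 c2 : chain R X n) :
  chain_in S c1 -> chain_in S c2 -> chain_in S (c1 ++ c2).
Proof. by move=> H1 H2 p Hp; case: (List.in_app_or _ _ _ Hp) => [/H1|/H2]. Qed.

Lemma chain_in_neg n S (c : chain R X n) : chain_in S c -> chain_in S (negc c).
Proof.
move=> H p Hp; have [q [E Hq]] := (List.in_map_iff _ _ _).1 Hp; rewrite -E /=; exact: H.
Qed.

Lemma chain_inS n S S' (c : chain R X n) : S `<=` S' -> chain_in S c -> chain_in S' c.
Proof. by move=> SS H p /H [H1 H2]; split => //; apply: subset_trans SS. Qed.

Variable xi : ('rV[R]_2 -> X) -> R.
Hypothesis hxi : cocycle1 xi.

Definition XI (c : chain R X 1) : R := \sum_(p <- c) p.1%:~R * xi p.2.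

Lemma XI_cat c1 c2 : XI (c1 ++ c2) = XI c1 + XI c2.
Proof. by rewrite /XI big_cat. Qed.

Lemma XI_neg c : XI (negc c) = - XI c.
Proof.
rewrite /XI big_map -sumrN; apply: eq_bigr => p _ /=.
by rewrite mulrNz mulNr.
Qed.

Lemma XI_nil : XI [::] = 0.
Proof. by rewrite /XI big_nil. Qed.

Lemma XI_bnd S (d : chain R X 2) : chain_in S d -> XI (bnd d) = 0.
Proof.
elim: d => [|p d IH] Hin; first by rewrite /bnd /= XI_nil.
rewrite (_ : bnd (p :: d) = [seq ((-1) ^+ (nat_of_ord i) * p.1, p.2 \o face i) | i <- enum 'I_3] ++ bnd d) //.
rewrite XI_cat IH ?addr0; last by move=> q Hq; apply: Hin; right.
rewrite /XI big_map big_enum /=.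
have [Hs _] := Hin p (or_introl erefl).
have H0 := hxi.2 _ Hs.
under eq_bigr do rewrite intrM.
transitivity (p.1%:~R * \sum_(i < 3) (-1) ^+ i * xi (p.2 \o face i)); last first.
  by rewrite H0 mulr0.
rewrite mulr_sumr; apply: eq_bigr => i _.
by rewrite rmorphXn /= rmorphN1 mulrCA mulrA.
Qed.

Lemma XI_coef0 c : (forall t, coef c t = 0) -> XI c = 0.
Proof.
move: {2}(size c) (leqnn (size c)) => n; elim: n c => [|n IH] [|p c] //=;
  rewrite ?XI_nil //.
move=> Hs Hc.
pose P (q : int * ('rV[R]_2 -> X)) := `[< same_simplex q.2 p.2 >].
rewrite /XI (bigID P) /=.
have E1 : \sum_(q <- p :: c | P q) q.1%:~R * xi q.2 = (coef (p::c) p.2)%:~R * xi p.2.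
  rewrite /coef -big_mkcond /= intr_sum mulr_suml; apply: eq_bigr => q /asboolP Hq.
  by rewrite (hxi.1 _ _ Hq).
rewrite E1 Hc mul0r add0r -big_filter.
apply: IH.
  rewrite /= /P asboolT //= size_filter.
  by rewrite (leq_trans (count_size _ _)).
move=> t; rewrite /coef big_filter.
case: (boolP `[< same_simplex p.2 t >]) => /asboolP Hpt.
  apply: big1 => q /negP Hq; case: ifP => // /asboolP Hqt.
  by exfalso; apply: Hq; apply/asboolP; apply: same_trans Hqt (same_sym Hpt).
have := Hc t; rewrite /coef (bigID P) /= big1 ?add0r // => q /asboolP Hq.
case: ifP => // /asboolP Hqt.
by exfalso; apply: Hpt; apply: same_trans (same_sym Hq) Hqt.
Qed.

Lemma XI_coef_eq c1 c2 : (forall t, coef c1 t = coef c2 t) -> XI c1 = XI c2.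
Proof.
move=> H; apply/eqP; rewrite -subr_eq0 -XI_neg -XI_cat; apply/eqP.
by apply: XI_coef0 => t; rewrite coef_cat coef_neg H subrr.
Qed.

End Chains.

Section Conn.
Variables (R : realType) (X : topologicalType).
Variable xi : ('rV[R]_2 -> X) -> R.
Hypothesis hxi : cocycle1 xi.

Definition cst0 (x : X) : 'rV[R]_1 -> X := fun _ => x.
Definition pt (a b : X) : chain R X 0 := [:: (1, cst0 b); (-1, cst0 a)].
Definition conn (S : set X) a b (d : chain R X 1) :=
  chain_in S d /\ forall t, coef (bnd d) t = coef (pt a b) t.
Definition Zc (S : set X) := forall c : chain R X 1, chain_in S c ->
  (forall t, coef (bnd c) t = 0) -> XI xi c = 0.

Lemma Zc_of S : hom_trivial R 1 S setT -> Zc S.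
Proof.
move=> H c Hc Hcyc; have [d [Hd Hbd]] := H c Hc Hcyc.
rewrite -(XI_coef_eq hxi Hbd). exact (@XI_bnd R X xi hxi _ d Hd).
Qed.

Lemma ZcS S S' : S `<=` S' -> Zc S' -> Zc S.
Proof. by move=> SS Z c Hc; apply: Z; apply: chain_inS Hc. Qed.

Lemma conn_mono S S' a b d : S `<=` S' -> conn S a b d -> conn S' a b d.
Proof. by move=> SS [H1 H2]; split => //; apply: chain_inS H1. Qed.

Lemma conn_tri S a b c d1 d2 d3 : Zc S -> conn S a b d1 -> conn S b c d2 ->
  conn S a c d3 -> XI xi d1 + XI xi d2 = XI xi d3.
Proof.
move=> Z [H1 B1] [H2 B2] [H3 B3].
have := Z (d1 ++ d2 ++ negc d3).
rewrite !XI_cat XI_neg => H; apply/eqP; rewrite -subr_eq0 -addrA H //.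
  by apply: chain_in_cat => //; apply: chain_in_cat => //; apply: chain_in_neg.
move=> t; rewrite !bnd_cat bnd_neg !coef_cat coef_neg B1 B2 B3 /coef !big_cons !big_nil /=.
by do 3 case: asboolP => _.
Qed.

Lemma conn_nil S a : conn S a a [::].
Proof.
split; first by [].
by move=> t; rewrite /coef /bnd /= !big_cons !big_nil; case: asboolP.
Qed.

Lemma conn_unique S a b d1 d2 : Zc S -> conn S a b d1 -> conn S a b d2 ->
  XI xi d1 = XI xi d2.
Proof.
move=> Z H1 H2; rewrite -(conn_tri Z H1 (conn_nil S b) H2).
by rewrite XI_nil addr0.
Qed.

Lemma conn_exists V U a b : hom_trivial R 0 V U -> V a -> V b ->
  exists d, conn U a b d.
Proof.
move=> H Va Vb.
have [] := H (pt a b).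
- move=> p [<-|[<-|[]]]; (split; [apply: continuous_subspaceT; exact: cst_continuous|]);
  by move=> _ [u _ <-].
- by rewrite /= !big_cons big_nil.
by move=> d [Hd Hb]; exists d.
Qed.

Definition hval (S : set X) (a y : X) : R :=
  match pselect (exists d, conn S a y d) with
  | left H => XI xi (proj1_sig (cid H))
  | right _ => 0 end.

Lemma hvalE S a y d : Zc S -> conn S a y d -> hval S a y = XI xi d.
Proof.
move=> Z Hd; rewrite /hval; case: pselect => [H|H]; last by exfalso; apply: H; exists d.
by case: (cid H) => d' Hd' /=; apply: conn_unique Hd' Hd.
Qed.

End Conn.

Section Seg.
Variables (R : realType) (X : topologicalType).

Lemma faceE n (i : 'I_n.+2) (u : 'rV[R]_n.+1) (j : 'I_n.+2) :
  face i u ord0 j = if (j < i)%N then u ord0 (inord j) else if j == i then 0 else u ord0 (inord j.-1).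
Proof.
rewrite /face mxE; case: unliftP => [k ->|->]; last by rewrite ltnn eqxx.
rewrite -val_eqE /= /bump; case: (leqP i k) => H /=.
  by rewrite add1n ltnNge (leq_trans H (leqnSn _)) /= gtn_eqF ?ltnS // add0n inord_val.
by rewrite add0n H inord_val.
Qed.

Definition seg (g : R -> X) (a b : R) : 'rV[R]_2 -> X :=
  fun u => g (a * u ord0 (inord 0) + b * u ord0 (inord 1)).
Definition seg2 (g : R -> X) (a b c : R) : 'rV[R]_3 -> X :=
  fun u => g (a * u ord0 (inord 0) + b * u ord0 (inord 1) + c * u ord0 (inord 2)).

Lemma within_comp (T : topologicalType) (A : set T) (L : T -> R) (g : R -> X) :
  continuous L -> (forall x, A x -> @unit_interval R (L x)) ->
  {within @unit_interval R, continuous g} -> {within A, continuous (g \o L)}.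
Proof.
move=> cL AL cg; apply/subspace_continuousP => x Ax.
have /subspace_continuousP cg' := cg.
move=> W /= HW; have := cg' (L x) (AL x Ax) W HW; rewrite /= => HW'.
have := cL x _ HW' => H.
change (nbhs x (fun y => A y -> W (g (L y)))).
have H2 : nbhs x (fun y => @unit_interval R (L y) -> W (g (L y))) := H.
by apply: (filterS _ H2) => y /= Hy Ay; exact: Hy (AL y Ay).
Qed.

Lemma simplex1 (u : 'rV[R]_2) : std_simplex u ->
  [/\ 0 <= u ord0 (inord 0), 0 <= u ord0 (inord 1) & u ord0 (inord 0) + u ord0 (inord 1) = 1].
Proof.
move=> [H0 H1]; split => //; move: H1; rewrite big_ord_recl big_ord1.
by congr (_ + _ = _); congr (u _ _); apply/val_inj; rewrite /= inordK.
Qed.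

Lemma simplex2 (u : 'rV[R]_3) : std_simplex u ->
  [/\ 0 <= u ord0 (inord 0), 0 <= u ord0 (inord 1), 0 <= u ord0 (inord 2) &
   u ord0 (inord 0) + u ord0 (inord 1) + u ord0 (inord 2) = 1].
Proof.
move=> [H0 H1]; split => //; move: H1; rewrite big_ord_recl big_ord_recl big_ord1 addrA.
by congr (_ + _ + _ = _); congr (u _ _); apply/val_inj; rewrite /= inordK.
Qed.

Lemma simplex0 (u : 'rV[R]_1) : std_simplex u -> u ord0 (inord 0) = 1.
Proof. by move=> [_]; rewrite big_ord1 => <-; congr (u _ _); apply/val_inj; rewrite /= inordK. Qed.

Lemma same_asbool n (s s' t : 'rV[R]_n.+1 -> X) : same_simplex s s' ->
  `[< same_simplex s t >] = `[< same_simplex s' t >].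
Proof.
move=> H; apply/asboolP/asboolP => H'.
  exact: same_trans (same_sym H) H'.
exact: same_trans H H'.
Qed.

Variable xi : ('rV[R]_2 -> X) -> R.
Hypothesis hxi : cocycle1 xi.
Variable g : R -> X.
Hypothesis hg : {within @unit_interval R, continuous g}.

Lemma lin_cont (a b : R) : continuous (fun u : 'rV[R]_2 => a * u ord0 (inord 0) + b * u ord0 (inord 1)).
Proof.
move=> u.
have H0 := @coord_continuous R 1 2 ord0 (inord 0) u.
have H1 := @coord_continuous R 1 2 ord0 (inord 1) u.
exact (cvgD (cvgMl_tmp (a := a) H0) (cvgMl_tmp (a := b) H1)).
Qed.

Lemma lin_cont3 (a b c : R) : continuous (fun u : 'rV[R]_3 =>
  a * u ord0 (inord 0) + b * u ord0 (inord 1) + c * u ord0 (inord 2)).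
Proof.
move=> u.
have H0 := @coord_continuous R 1 3 ord0 (inord 0) u.
have H1 := @coord_continuous R 1 3 ord0 (inord 1) u.
have H2 := @coord_continuous R 1 3 ord0 (inord 2) u.
exact (cvgD (cvgD (cvgMl_tmp (a := a) H0) (cvgMl_tmp (a := b) H1)) (cvgMl_tmp (a := c) H2)).
Qed.

Lemma seg_bounds a b (u : 'rV[R]_2) : a <= b -> std_simplex u ->
  a <= a * u ord0 (inord 0) + b * u ord0 (inord 1) <= b.
Proof. by move=> ab /simplex1 [H0 H1 H2]; apply/andP; split; nra. Qed.

Lemma seg_sing a b : 0 <= a -> a <= b -> b <= 1 -> sing_simplex (seg g a b).
Proof.
move=> a0 ab b1; rewrite /sing_simplex.
change (seg g a b) with (g \o (fun u : 'rV[R]_2 => a * u ord0 (inord 0) + b * u ord0 (inord 1))).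
apply: (within_comp (@lin_cont a b)) => // u Hu.
by have /andP[H1 H2] := seg_bounds ab Hu; rewrite /unit_interval /=; apply/andP; split; lra.
Qed.

Lemma seg_conn (S : set X) a b : 0 <= a -> a <= b -> b <= 1 ->
  (forall s, a <= s <= b -> S (g s)) -> conn S (g a) (g b) [:: (1, seg g a b)].
Proof.
move=> a0 ab b1 HS; split.
  move=> p [<-|[]]; split; first exact: seg_sing.
  by move=> _ [u Hu <-]; apply: HS; apply: seg_bounds.
move=> t; rewrite /bnd /= cats0 /coef big_map big_enum /= !big_cons big_nil /=.
rewrite big_ord_recl big_ord1 /= addr0.
rewrite (@same_asbool _ _ (cst0 (R:=R) (g b))); last first.
  move=> u /simplex0 Hu; rewrite /seg /cst0 /= !faceE -!val_eqE /= !inordK //=.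
  by rewrite mulr0 add0r Hu mulr1.
rewrite (@same_asbool _ (seg g a b \o face (lift ord0 ord0)) (cst0 (R:=R) (g a))); last first.
  move=> u /simplex0 Hu; rewrite /seg /cst0 /= !faceE -!val_eqE /= !inordK //=.
  by rewrite mulr0 addr0 Hu mulr1.
by rewrite expr0 mul1r expr1 mulN1r.
Qed.


Lemma seg_add a b c : 0 <= a -> a <= b -> b <= c -> c <= 1 ->
  xi (seg g a c) = xi (seg g a b) + xi (seg g b c).
Proof.
move=> a0 ab bc c1.
have Hs : sing_simplex (seg2 g a b c).
  rewrite /sing_simplex.
  change (seg2 g a b c) with (g \o (fun u : 'rV[R]_3 =>
    a * u ord0 (inord 0) + b * u ord0 (inord 1) + c * u ord0 (inord 2))).
  apply: (within_comp (@lin_cont3 a b c)) => // u /simplex2 [H0 H1 H2 H3].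
  rewrite /unit_interval /=; apply/andP; split; nra.
have := hxi.2 _ Hs.
rewrite !big_ord_recl big_ord0 addr0 /=.
have E0 : xi (seg2 g a b c \o face ord0) = xi (seg g b c).
  apply: hxi.1 => u _; rewrite /seg2 /seg /= !faceE -!val_eqE /= !inordK //=.
  by rewrite mulr0 add0r.
have E1 : xi (seg2 g a b c \o face (lift ord0 ord0)) = xi (seg g a c).
  apply: hxi.1 => u _; rewrite /seg2 /seg /= !faceE -!val_eqE /= !inordK //=.
  by rewrite mulr0 addr0.
have E2 : xi (seg2 g a b c \o face (lift ord0 (lift ord0 ord0))) = xi (seg g a b).
  apply: hxi.1 => u _; rewrite /seg2 /seg /= !faceE -!val_eqE /= !inordK //=.
  by rewrite mulr0 addr0.
rewrite E0 E1 E2 /bump /= expr0 expr1 (_ : (1 + (1 + 0))%N = 2%N) // expr2 => H.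
lra.
Qed.

Lemma seg_zero a : 0 <= a -> a <= 1 -> xi (seg g a a) = 0.
Proof. by move=> a0 a1; have := seg_add a0 (lexx a) (lexx a) a1; lra. Qed.

Lemma path_seg : same_simplex (path_simplex g) (seg g 0 1).
Proof.
move=> u _; rewrite /path_simplex /seg mul0r add0r mul1r; congr (g (u _ _)).
by apply/val_inj; rewrite /= inordK.
Qed.

Lemma tbounds n (t : nat -> R) : t 0%N = 0 -> t n = 1 ->
  (forall m, (m < n)%N -> t m <= t m.+1) -> forall m, (m <= n)%N -> 0 <= t m <= 1.
Proof.
move=> t0 tn tm m mn; apply/andP; split.
  elim: m mn => [|m IH] mn; first by rewrite t0.
  by apply: le_trans (IH (ltnW mn)) (tm _ mn).
have : forall k m, (m + k = n)%N -> t m <= 1.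
  elim=> [|k IH] m' E; first by rewrite addn0 in E; rewrite E tn.
  apply: le_trans (tm m' _) (IH m'.+1 _); first by rewrite -E; lia.
  by rewrite -E; lia.
by move=> H; apply: (H (n - m)%N); rewrite subnKC.
Qed.

Lemma seg_sum n (t : nat -> R) : t 0%N = 0 -> t n = 1 ->
  (forall m, (m < n)%N -> t m <= t m.+1) ->
  \sum_(m < n) xi (seg g (t m) (t m.+1)) = xi (seg g 0 1).
Proof.
move=> t0 tn tm.
have B := tbounds t0 tn tm.
suff H : forall m, (m <= n)%N -> \sum_(i < m) xi (seg g (t i) (t i.+1)) = xi (seg g 0 (t m)).
  by rewrite H // tn.
elim=> [|m IH] mn; first by rewrite big_ord0 t0 seg_zero // ler01.
rewrite big_ord_recr /= IH ?(ltnW mn) //.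
have /andP[_ h1] := B m (ltnW mn); have /andP[_ h2] := B m.+1 mn.
have /andP[h0 _] := B m (ltnW mn).
by rewrite (@seg_add 0 (t m) (t m.+1)) // tm.
Qed.

End Seg.

Definition cJ (J : Type) : Type := J.
HB.instance Definition _ (J : Type) := gen_eqMixin (cJ J).
HB.instance Definition _ (J : Type) := gen_choiceMixin (cJ J).

Section Topo.
Variable X : topologicalType.

Definition locfin (J : Type) (W : J -> set X) :=
  forall x : X, exists N : set X, nbhs x N /\ finite_set [set j | W j `&` N !=set0].

Lemma lf_closure (J : Type) (W : J -> set X) (y : X) : locfin W ->
  closure (\bigcup_(j in setT) W j) y -> exists j, closure (W j) y.
Proof.
move=> lf cy; apply: contrapT => Hn.
have Hn' : forall j, ~ closure (W j) y by move=> j Hj; apply: Hn; exists j.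
have [N [Ny /(@finite_seqP (cJ J)) [s Es]]] := lf y.
have : exists M, nbhs y M /\ forall j : cJ J, j \in s -> W j `&` M = set0.
  elim: s {Es} => [|a s [M [My HM]]]; first by exists setT; split => //; apply: filterT.
  have : ~ closure (W a) y := Hn' a.
  move=> /existsNP [B /not_implyP [By /set0P/negP]]; rewrite negbK => /eqP WB.
  exists (M `&` B); split; first exact: filterI.
  move=> j; rewrite inE => /orP [/eqP ->|js].
    by rewrite -subset0 => z [Wz [_ Bz]]; rewrite -WB; split.
  by rewrite -subset0 => z [Wz [Mz _]]; rewrite -(HM j js); split.
move=> [M [My HM]].
have [z [[j _ Wz] [Nz Mz]]] := cy _ (filterI Ny My).
have js : (j : cJ J) \in s.
  have : [set j | W j `&` N !=set0] j by exists z.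
  by rewrite Es.
by have := HM j js; rewrite -subset0 => /(_ z); apply; split.
Qed.

Lemma locfinS (J : Type) (W W' : J -> set X) : (forall j, W' j `<=` W j) ->
  locfin W -> locfin W'.
Proof.
move=> WW lW x; have [N [Nx fN]] := lW x; exists N; split => //.
by apply: sub_finite_set fN => j [z [Wz Nz]]; exists z; split => //; apply: WW.
Qed.

Lemma closure_ne (A : set X) z : closure A z -> exists w, A w.
Proof. by move=> cz; have [w [Aw _]] := cz setT filterT; exists w. Qed.

Variable R : realType.
Hypothesis hX : hausdorff_space X.
Hypothesis pX : paracompact X.

Lemma para_sep (C D : set X) : closed C ->
  (forall c, C c -> exists O, [/\ open O, O c & closure O `&` D = set0]) ->
  exists V, [/\ open V, C `<=` V & closure V `&` D = set0].
Proof.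
move=> cC HO.
have HO0 : forall c : X, exists Oc : set X,
    [/\ open Oc, C c -> Oc c & closure Oc `&` D = set0].
  move=> c; case: (pselect (C c)) => Cc.
    by have [Oc [? ? ?]] := HO c Cc; exists Oc; split.
  by exists set0; split => //; [exact: open0 | rewrite closure0 set0I].
have [Of HO'] := choice HO0.
pose U (i : option X) := if i is Some c then Of c else ~` C.
have oU : forall i, open (U i).
  by case => [c|] /=; [case: (HO' c) | exact: closed_openC].
have cU : forall x, exists i, U i x.
  move=> x; case: (pselect (C x)) => Cx; last by exists None.
  by exists (Some x); case: (HO' x) => _ h _; exact: h.
have [J [W [oW cW rW lW]]] := pX oU cU.
pose W' j := [set z | W j z /\ W j `&` C !=set0].
exists (\bigcup_(j in setT) W' j); split.
- apply: bigcup_open => j _.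
  case: (pselect (W j `&` C !=set0)) => h.
    have -> : W' j = W j by apply/seteqP; split => z /=; [case | move=> Wz; split].
    exact: oW.
  have -> : W' j = set0 by apply/seteqP; split => z //= [].
  exact: open0.
- move=> c Cc; have [j Wj] := cW c; exists j => //; split => //; exists c; split => //.
- rewrite -subset0 => z [cz Dz].
  have lW' : locfin W' by apply: locfinS lW => j z' [].
  have [j cj] := lf_closure lW' cz.
  have [z' [Wz' [c' [Wc' Cc']]]] := closure_ne cj.
  have [[c0|] Wi] := rW j.
    have : closure (Of c0) z by apply: closureS cj => w [/Wi].
    case: (HO' c0) => _ _; rewrite -subset0 => H cz0; exact: H z (conj cz0 Dz).
  exact: Wi c' Wc' Cc'.
Qed.

Lemma para_reg (C : set X) x : closed C -> ~ C x ->
  exists V, [/\ open V, C `<=` V & ~ closure V x].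
Proof.
move=> cC nCx.
have [] := @para_sep C [set x] cC.
  move=> c Cc.
  have cx : c != x by apply/eqP => E; apply: nCx; rewrite -E.
  move: hX; rewrite open_hausdorff => /(_ c x cx) [[A B] /= [/set_mem Ac /set_mem Bx]].
  move=> [oA oB /eqP AB].
  exists A; split => //.
  rewrite -subset0 => z [cz /= zx]; rewrite zx in cz.
  have [w [Aw Bw]] := cz B (open_nbhs_nbhs (conj oB Bx)).
  by rewrite -subset0 in AB; apply: (AB w).
move=> V [oV CV HV]; exists V; split => // cVx.
by rewrite -subset0 in HV; apply: (HV x).
Qed.

Lemma para_normal : normal_space X.
Proof.
apply/(@normal_openP R) => A B cA cB AB.
have HO : forall c, A c -> exists O, [/\ open O, O c & closure O `&` B = set0].
  move=> c Ac.
  have nBc : ~ B c by move=> Bc; rewrite -subset0 in AB; exact: AB c (conj Ac Bc).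
  have [V [oV BV ncV]] := para_reg cB nBc.
  exists (~` closure V); split.
  - exact: closed_openC (@closed_closure _ V).
  - exact: ncV.
  - rewrite -subset0 => b [cb Bb].
    have [w [nw Vw]] := cb V (open_nbhs_nbhs (conj oV (BV b Bb))).
    by apply: nw; exact: subset_closure.
have [U [oU AU HU]] := para_sep cA HO.
exists U, (~` closure U); split => //.
- exact: closed_openC (@closed_closure _ U).
- by move=> b Bb Ub; rewrite -subset0 in HU; exact: HU b (conj Ub Bb).
- rewrite -subset0 => z [Uz nz]; apply: nz; exact: subset_closure.
Qed.

Lemma part_unity (J : Type) (W : J -> set X) : (forall j, open (W j)) ->
  (forall x, exists j, W j x) -> locfin W ->
  exists phi : J -> X -> R, [/\ forall j, continuous (phi j),
     forall j x, 0 <= phi j x,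
     forall j y, ~ W j y -> \forall z \near y, phi j z = 0 &
     forall y, exists j, phi j y = 1].
Proof.
move=> oW cW lW.
have shr : forall x, exists jO : J * set X,
    [/\ open jO.2, jO.2 x & closure jO.2 `<=` W jO.1].
  move=> x; have [j Wj] := cW x.
  have [V [oV CV ncV]] := @para_reg (~` W j) x (open_closedC (oW j)) (fun h => h Wj).
  exists (j, ~` closure V); split => /=.
  - exact: closed_openC (@closed_closure _ V).
  - exact: ncV.
  - move=> z cz; apply: contrapT => nWz.
    have [w [nw Vw]] := cz V (open_nbhs_nbhs (conj oV (CV z nWz))).
    by apply: nw; apply: subset_closure.
have [jO HjO] := choice shr.
have oO : forall x, open (jO x).2 by move=> x; case: (HjO x).
have cO : forall x, exists y, (jO y).2 x by move=> x; exists x; case: (HjO x).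
have [L [P [oP cP rP lP]]] := pX oO cO.
have [xl Hxl] := choice rP.
pose A j := \bigcup_(l in [set l | (jO (xl l)).1 = j]) closure (P l).
have AW : forall j, A j `<=` W j.
  move=> j z [l /= <- cz]; case: (HjO (xl l)) => _ _; apply.
  exact: closureS (Hxl l) z cz.
have Acov : forall y, exists j, A j y.
  move=> y; have [l Pl] := cP y; exists (jO (xl l)).1; exists l => //.
  exact: subset_closure.
have Acl : forall j, closed (A j).
  move=> j z cz.
  pose P' l := [set w | P l w /\ (jO (xl l)).1 = j].
  have lP' : locfin P' by apply: locfinS lP => l w [].
  have Asub : A j `<=` closure (\bigcup_(l in setT) P' l).
    move=> w [l /= Hl cw]; apply: closureS cw => v Pv; exists l => //.
  have : closure (\bigcup_(l in setT) P' l) z.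
    by apply: (@closed_closure _ (\bigcup_(l in setT) P' l)); apply: closureS cz.
  move=> /(lf_closure lP') [l cl].
  have [w [_ Hl]] := closure_ne cl.
  by exists l => //; apply: closureS cl => v [Pv _].
have nX := para_normal.
have sep : forall j, exists UV : set X * set X,
    [/\ open UV.1, open UV.2, A j `<=` UV.1, ~` W j `<=` UV.2 & UV.1 `&` UV.2 = set0].
  move=> j.
  have dj : A j `&` ~` W j = set0 by rewrite -subset0 => z [/AW Wz nWz].
  have [U [V [oU oV AU WV UV]]] := (@normal_openP R X).1 nX (A j) (~` W j) (Acl j)
    (open_closedC (oW j)) dj.
  by exists (U, V); split.
have [UV HUV] := choice sep.
have ury : forall j, exists f : X -> R, [/\ continuous f, range f `<=` `[0, 1],
    f @` (~` (UV j).1) `<=` [set 0] & f @` A j `<=` [set 1]].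
  move=> j; case: (HUV j) => oU _ AU _ _.
  apply/uniform_separatorP; apply: ((@normal_separatorP R X).1 nX).
  - exact: open_closedC.
  - exact: Acl.
  - by rewrite -subset0 => z [nU /AU].
have [phi Hphi] := choice ury.
exists phi; split.
- by move=> j; case: (Hphi j).
- move=> j x; case: (Hphi j) => _ Hr _ _.
  have := Hr (phi j x) (imageT (phi j) x).
  by rewrite /= in_itv /= => /andP [].
- move=> j y nWy; case: (HUV j) => _ oV _ WV UV0.
  have : nbhs y (UV j).2 by apply: open_nbhs_nbhs; split => //; apply: WV.
  apply: filterS => z Vz; case: (Hphi j) => _ _ H0 _.
  apply: H0; exists z => //= Uz.
  by rewrite -subset0 in UV0; apply: (UV0 z).
- move=> y; have [j Ay] := Acov y; exists j; case: (Hphi j) => _ _ _ H1.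
  by apply: H1; exists y.
Qed.

End Topo.

Section Leb.
Variables (R : realType) (X : topologicalType).

Lemma within_eps (g : R -> X) (x : R) (W : set X) :
  {within @unit_interval R, continuous g} ->
  @unit_interval R x -> open W -> W (g x) ->
  exists2 e : R, 0 < e & forall s, @unit_interval R s -> `|x - s| < e -> W (g s).
Proof.
move=> cg ux oW Wx.
have /subspace_continuousP cg' := cg.
have H := cg' x ux W (open_nbhs_nbhs (conj oW Wx)).
have H2 : nbhs x (fun s => @unit_interval R s -> W (g s)) := H.
move: H2 => /nbhs_ballP [e e0 He]; exists e => // s us xs.
by apply: He => //; rewrite /ball /=.
Qed.

Lemma unit_itv : `[(0:R), 1]%classic = @unit_interval R.
Proof. by apply/seteqP; split => x /=; rewrite in_itv. Qed.

Lemma leb_number (J : Type) (W : J -> set X) (g : R -> X) :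
  (forall j, open (W j)) -> (forall x, exists j, W j x) ->
  {within @unit_interval R, continuous g} ->
  exists N : nat, forall x, @unit_interval R x -> exists j, forall s,
    @unit_interval R s -> `|s - x| <= N.+1%:R^-1 -> W j (g s).
Proof.
move=> oW cW cg.
have cpt := @segment_compact R 0 1; rewrite unit_itv in cpt.
pose P := fun n (x : R) => exists j, forall s, @unit_interval R s -> `|s - x| <= n.+1%:R^-1 -> W j (g s).
have Hcov : forall x, @unit_interval R x -> \forall x' \near x & n \near \oo, P n x'.
  move=> x ux; have [j Wj] := cW (g x).
  have [e e0 He] := within_eps cg ux (oW j) Wj.
  have e2 : 0 < e / 2 by rewrite divr_gt0.
  exists (ball x (e / 2), [set n : nat | n.+1%:R^-1 < e / 2]) => /=.
    by split; [exact: nbhsx_ballx | exact: (near_infty_natSinv_lt (PosNum e2))].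
  case => x' n /= [Bx' Hn]; exists j => s us hs; apply: He => //.
  move: Bx'; rewrite /ball /= => Bx'.
  have h1 : `|s - x'| < e / 2 := le_lt_trans hs Hn.
  have := ler_distD x' x s; rewrite (distrC x' s) => H; apply: (le_lt_trans H).
  by rewrite (splitr e); exact: ltrD Bx' h1.
have := (compact_near_coveringP _).1 cpt nat \oo P _ Hcov.
move=> [N0 _ HN]; exists N0 => x ux; exact: (HN N0 (leqnn N0) x ux).
Qed.


Lemma admissible_exists (J : Type) (W : J -> set X) (g : R -> X) :
  (forall j, open (W j)) -> (forall x, exists j, W j x) ->
  {within @unit_interval R, continuous g} ->
  exists n t k, admissible W g n t k.
Proof.
move=> oW cW cg; have [N HN] := leb_number oW cW cg.
pose t (m : nat) : R := m%:R / N.+1%:R.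
have Np : 0 < N.+1%:R :> R by rewrite ltr0n.
have tB : forall m, (m <= N.+1)%N -> @unit_interval R (t m).
  move=> m mN; rewrite /unit_interval /= /t; apply/andP; split.
    by rewrite divr_ge0 // ler0n.
  by rewrite ler_pdivrMr // mul1r ler_nat.
have tS : forall m, t m.+1 - t m = N.+1%:R^-1.
  by move=> m; rewrite /t -mulrBl -natrB // subSnn mul1r.
have [j0 _] := cW (g 0).
have Hex : forall m, exists j, (m <= N.+1)%N -> forall s,
    @unit_interval R s -> `|s - t m| <= N.+1%:R^-1 -> W j (g s).
  move=> m; case: (boolP (m <= N.+1)%N) => mN; last by exists j0.
  by have [j Hj] := HN (t m) (tB m mN); exists j.
have [k Hk] := choice Hex.
exists N.+1, t, k; split.
- by rewrite /t mul0r.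
- by rewrite /t divff // pnatr_eq0.
- by move=> m _; rewrite -subr_ge0 tS invr_ge0 ler0n.
- clearbody t; move=> m mN s /andP [h1 h2]; apply: (Hk m (ltnW mN)).
    have /andP [a1 a2] := tB m (ltnW mN); have /andP [b1 b2] := tB m.+1 mN.
    by rewrite /unit_interval /=; apply/andP; split; lra.
  rewrite -(tS m) ger0_norm; lra.
Qed.

End Leb.


Section Helpers.
Variable R : realType.

Lemma sum_cont (T : topologicalType) (I : Type) (s : seq I) (F : I -> T -> R) (y : T) :
  (forall i, {for y, continuous (F i)}) ->
  {for y, continuous (fun z => \sum_(i <- s) F i z)}.
Proof.
move=> HF; elim: s => [|a s IH].
  have -> : (fun z => \sum_(i <- [::]) F i z) = (fun=> 0) by apply: funext => z; rewrite big_nil.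
  exact: cst_continuous.
have -> : (fun z => \sum_(i <- a :: s) F i z) =
    (fun z => F a z + \sum_(i <- s) F i z) by apply: funext => z; rewrite big_cons.
exact (cvgD (HF a) IH).
Qed.

Lemma near_all (T : topologicalType) (I : eqType) (s : seq I) (P : I -> T -> Prop) (y : T) :
  (forall i, i \in s -> \forall z \near y, P i z) ->
  \forall z \near y, forall i, i \in s -> P i z.
Proof.
elim: s => [|a s IH] H.
  by apply: (@filterE _ (nbhs y)) => z i; rewrite in_nil.
have IH' := IH (fun i Hi => H i ltac:(by rewrite in_cons Hi orbT)).
have Ha := H a (mem_head a s).
near=> z => i; rewrite in_cons => /orP [/eqP ->|Hi].
  exact: (near Ha z).
exact: (near IH' z).
Unshelve. all: by end_near.
Qed.

Lemma sum_ge_mem (I : eqType) (s : seq I) (F : I -> R) i0 : i0 \in s ->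
  (forall i, 0 <= F i) -> F i0 <= \sum_(i <- s) F i.
Proof.
move=> Hi F0; elim: s Hi => [|a s IH] //; rewrite in_cons big_cons => /orP [/eqP ->|Hi].
  by rewrite lerDl sumr_ge0.
by rewrite (le_trans (IH Hi)) // lerDr.
Qed.

Lemma cont_near (T : topologicalType) (f G : T -> R) (y : T) :
  (\forall z \near y, f z = G z) -> {for y, continuous G} -> {for y, continuous f}.
Proof.
move=> H HG; have fy : f y = G y := nbhs_singleton H.
move: HG; rewrite /prop_for /continuous_at fy => HG.
apply: (cvg_trans _ HG); apply: near_eq_cvg.
near=> z; exact/esym/(near H z).
Unshelve. all: by end_near.
Qed.

End Helpers.

Section Main.
Variables (R : realType) (X : topologicalType).
Hypotheses (hX : hausdorff_space X) (pX : paracompact X) (hl : HLC R X).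
Variable xi : ('rV[R]_2 -> X) -> R.
Hypothesis hxi : cocycle1 xi.

Theorem main_thm : exists (I : Type) (U : I -> set X) (f : I -> X -> R),
    closed_1form U f /\
    forall g : R -> X, loop g -> path_integral_is U f g (xi (path_simplex g)).
Proof.
have H1 : forall x : X, exists V, nbhs x V /\ hom_trivial R 1 V setT.
  move=> x; have [V [nV _ hV]] := hl (@filterT _ (nbhs x) _).
  by exists V; split => //; exact: hV.
have [V1 HV1] := choice H1.
have H2 : forall x, exists V, [/\ nbhs x V, V `<=` V1 x & hom_trivial R 0 V (V1 x)].
  move=> x; have [V [nV sV hV]] := hl (HV1 x).1; exists V; split => //; exact: hV.
have [V2 HV2] := choice H2.
pose O x := (V2 x)°.
have oO : forall x, open (O x) by move=> x; exact: open_interior.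
have cO : forall x, exists y, O y x by move=> x; exists x; case: (HV2 x).
have [J [W [oW cW rW lW]]] := pX oO cO.
have [xj Hxj] := choice rW.
have WV2 : forall j, W j `<=` V2 (xj j) by move=> j z /(Hxj j) /interior_subset.
have WV1 : forall j, W j `<=` V1 (xj j).
  by move=> j z /(WV2 j); case: (HV2 (xj j)) => _ s _; exact: s.
have Z : forall j, Zc xi (V1 (xj j)) by move=> j; exact: (Zc_of hxi (HV1 (xj j)).2).
pose h j y := hval xi (V1 (xj j)) (xj j) y.
have hK : forall j y y' e, W j y -> W j y' -> conn (V1 (xj j)) y y' e ->
    h j y' = h j y + XI xi e.
  move=> j y y' e Wy Wy' He.
  case: (HV2 (xj j)) => nV _ ht.
  have cV : V2 (xj j) (xj j) := nbhs_singleton nV.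
  have [d Hd] := conn_exists ht cV (WV2 j y Wy).
  have [d' Hd'] := conn_exists ht cV (WV2 j y' Wy').
  rewrite /h (hvalE (Z j) Hd) (hvalE (Z j) Hd').
  exact/esym/(conn_tri (Z j) Hd He Hd').
have LC : forall i j x, W i x -> W j x -> exists V, [/\ nbhs x V, V `<=` W i `&` W j &
    forall y, V y -> h i y - h j y = h i x - h j x].
  move=> i j x Wi Wj.
  have nU : nbhs x (W i `&` W j) by apply: open_nbhs_nbhs; split; [exact: openI | split].
  have [V [nV sV hV]] := hl nU.
  exists V; split => // y Vy.
  have [e He] := conn_exists (hV 0%N) (nbhs_singleton nV) Vy.
  have Hi : conn (V1 (xj i)) x y e by apply: conn_mono He => z [/WV1].
  have Hj : conn (V1 (xj j)) x y e by apply: conn_mono He => z [_ /WV1].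
  have [Wyi Wyj] := sV y Vy.
  rewrite (hK i x y e Wi Wyi Hi) (hK j x y e Wj Wyj Hj); lra.
have [phi [cphi phi0 phiW phi1]] := part_unity R hX pX oW cW lW.
have phiW' : forall j z, ~ W j z -> phi j z = 0.
  by move=> j z nW; exact: (nbhs_singleton (phiW j z nW)).
pose S z := \sum_(j \in [set: cJ J]) phi j z.
pose H z := \sum_(j \in [set: cJ J]) phi j z * h j z.
pose Q z := H z / S z.
pose f j z := h j z - Q z.
have loc : forall y : X, exists N : set X, exists r : seq (cJ J), [/\ nbhs y N,
   forall z, N z -> forall G : cJ J -> R, (forall j, ~ W j z -> G j = 0) ->
     \sum_(j \in [set: cJ J]) G j = \sum_(j <- r) G j &
   forall j z, N z -> W j z -> j \in r].
  move=> y; have [N [Ny fN]] := lW y.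
  have fN' : finite_set [set j : cJ J | W j `&` N !=set0] := fN.
  exists N, (finmap.enum_fset (fset_set [set j : cJ J | W j `&` N !=set0])); split => //.
  - move=> z Nz G HG.
    rewrite -(fsbig_widen [set j : cJ J | W j `&` N !=set0]) //; last first.
      move=> j [_ /= nj]; apply: HG => Wz; apply: nj; exists z; split => //.
    by rewrite fsbig_finite.
  - move=> j z Nz Wz; change (j \in fset_set [set j : cJ J | W j `&` N !=set0]).
    by rewrite (in_fset_set fN'); apply/mem_set; exists z; split.
exists J, W, f; split.
  split => //.
  - move=> i; rewrite continuous_open_subspace //; move=> y /set_mem Wy.
    have [N [r [Ny Hsum Hr]]] := loc y.
    have Sr : forall z, N z -> 1 <= \sum_(j <- r) phi j z.
      move=> z Nz; have [j0 Hj0] := phi1 z.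
      have Wj0 : W j0 z.
        apply: contrapT => nW; move: (oner_neq0 R); rewrite -Hj0 phiW' // eqxx //.
      rewrite -Hj0; apply: (@sum_ge_mem _ _ r (fun j => phi j z) j0); first exact: (Hr j0 z Nz Wj0).
      by move=> j; exact: phi0.
    pose cc j := if `[< W j y >] then h i y - h j y else 0.
    pose G z := (\sum_(j <- r) phi j z * cc j) / (\sum_(j <- r) phi j z).
    apply: (@cont_near _ _ _ G).
      have Hn : \forall z \near y, forall j, j \in r ->
          phi j z * (h i z - h j z) = phi j z * cc j.
        apply: near_all => j _; rewrite /cc; case: asboolP => Wjy.
          have [V [nV sV HV]] := LC i j y Wy Wjy.
          by near=> z; rewrite HV //; exact: (near nV z).
        near=> z; have -> : phi j z = 0 by exact: (near (phiW j y Wjy) z).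
        by rewrite !mul0r.
      near=> z.
      have Nz : N z by exact: (near Ny z).
      have Hz : forall j, j \in r -> phi j z * (h i z - h j z) = phi j z * cc j.
        by exact: (near Hn z).
      rewrite /f /Q /H /S (Hsum z Nz (fun j => phi j z * h j z)); last first.
        by move=> j nW; rewrite phiW' // mul0r.
      rewrite (Hsum z Nz (fun j => phi j z)); last by move=> j nW; rewrite phiW'.
      rewrite /G.
      have -> : \sum_(j <- r) phi j z * cc j = \sum_(j <- r) phi j z * (h i z - h j z).
        by apply: eq_big_seq => j jr; rewrite Hz.
      have -> : \sum_(j <- r) phi j z * (h i z - h j z) =
          h i z * (\sum_(j <- r) phi j z) - \sum_(j <- r) phi j z * h j z.
        by rewrite mulr_sumr -sumrB; apply: eq_bigr => j _; rewrite mulrBr mulrC.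
      have Sz := Sr z Nz.
      have Sz0 : \sum_(j <- r) phi j z != 0 by rewrite gt_eqF // (lt_le_trans ltr01 Sz).
      field.
      exact: Sz0.
    have Sy : \sum_(j <- r) phi j y != 0.
      by rewrite gt_eqF // (lt_le_trans ltr01 (Sr y (nbhs_singleton Ny))).
    have cN : {for y, continuous (fun z => \sum_(j <- r) phi j z * cc j)}.
      apply: (@sum_cont _ _ _ r (fun j z => phi j z * cc j)) => j.
      exact (cvgMr_tmp (b := cc j) (cphi j y)).
    have cD : {for y, continuous (fun z => \sum_(j <- r) phi j z)}.
      apply: (@sum_cont _ _ _ r (fun j z => phi j z)) => j; exact: cphi.
    exact (continuousM cN (continuousV Sy cD)).
  - move=> i j x Wi Wj; have [V [nV sV HV]] := LC i j x Wi Wj.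
    have EE : forall a b c : R, (a - c) - (b - c) = a - b by move=> *; lra.
    exists V; split => // y Vy; rewrite /f EE EE; exact: HV y Vy.
move=> g [cg gl]; split; first exact: admissible_exists oW cW cg.
move=> n t k [t0 tn tm tW]; rewrite /riemann_sum.
have B := tbounds t0 tn tm.
have E : forall m : 'I_n, f (k m) (g (t m.+1)) - f (k m) (g (t m)) =
    xi (seg g (t m) (t m.+1)) - (Q (g (t m.+1)) - Q (g (t m))).
  move=> [m mn] /=.
  have /andP [a0 a1] := B m (ltnW mn); have /andP [b0 b1] := B m.+1 mn.
  have Wa : W (k m) (g (t m)) by apply: tW => //; rewrite lexx tm.
  have Wb : W (k m) (g (t m.+1)) by apply: tW => //; rewrite (tm m mn) lexx.
  have Hc : conn (V1 (xj (k m))) (g (t m)) (g (t m.+1)) [:: (1, seg g (t m) (t m.+1))].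
    apply: conn_mono (WV1 (k m)) _.
    by apply: (seg_conn cg a0 (tm m mn) b1) => s Hs; exact: tW.
  rewrite /f (hK _ _ _ _ Wa Wb Hc) /XI big_cons big_nil /= addr0 mulr1z mul1r.
  have EE : forall a b c d : R, (a + b - c) - (a - d) = b - (c - d) by move=> *; lra.
  exact: EE.
rewrite (eq_bigr _ (fun m _ => E m)) sumrB (seg_sum hxi cg t0 tn tm).
rewrite -(big_mkord xpredT (fun m => Q (g (t m.+1)) - Q (g (t m)))) telescope_sumr //.
rewrite tn t0 gl subrr subr0.
exact/esym/(hxi.1 _ _ (path_seg g)).
Unshelve. all: by end_near.
Qed.


End Main.


Unset Implicit Arguments.

Theorem mainTheorem11 (R : realType) (X : topologicalType) :
  hausdorff_space X -> paracompact X -> HLC R X ->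
  forall xi : ('rV[R]_2 -> X) -> R, cocycle1 xi ->
  exists (I : Type) (U : I -> set X) (f : I -> X -> R),
    closed_1form U f /\
    forall g : R -> X, loop g -> path_integral_is U f g (xi (path_simplex g)).
Proof.
move=> hX pX hl xi hxi; exact: (main_thm hX pX hl hxi).
Qed.
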